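(* Let $\mathfrak{F}$ be a class of finite groups and let $G$ be a 2-generated finite soluble group with $G\notin\mathfrak{F}$. If $x,y\in V(G)$, then $x$ and $y$ belong to the same connected component of $\Gamma_\mathfrak{F}(G)$.
   Context: $V(G)$ is the set of $x\in G$ such that $G=\langle x,z\rangle$ for some $z\in G$. $\Gamma_\mathfrak{F}(G)$ is the graph whose vertices are the elements $g\in G$ for which some $h\in G$ satisfies $\langle g,h\rangle\notin\mathfrak{F}$, with $g,h$ adjacent iff $\langle g,h\rangle\notin\mathfrak{F}$. *)

(* Defs.v *)
From mathcomp Require Import all_boot all_fingroup all_solvable.
Set Implicit Arguments. Unset Strict Implicit. Unset Printing Implicit Defensive.
Local Open Scope group_scope.

(* A class of finite groups, restricted to the subgroups of the ambient
   finGroupType gT (only subgroups of G are ever tested for membership). *)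
Definition group_class (gT : finGroupType) := pred {set gT}.

Definition Vgen (gT : finGroupType) (G : {group gT}) : {set gT} :=
  [set x in G | [exists z in G, G == <<[set x; z]>>]].

Definition GammaF_adj (gT : finGroupType) (F : group_class gT)
  (G : {group gT}) : rel gT :=
  fun g h => [&& g \in G, h \in G & ~~ F <<[set g; h]>>].

Definition GammaF_vert (gT : finGroupType) (F : group_class gT)
  (G : {group gT}) : {set gT} :=
  [set g in G | [exists h in G, ~~ F <<[set g; h]>>]].

Definition two_generated (gT : finGroupType) (G : {group gT}) : Prop :=
  exists a b : gT, G :=: <<[set a; b]>>.

(* Main.v *)
Require Import Defs.
From mathcomp Require Import all_boot all_fingroup all_solvable.
Set Implicit Arguments. Unset Strict Implicit. Unset Printing Implicit Defensive.
Local Open Scope group_scope.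


Section Sec.
Variables (gT : finGroupType) (G N : {group gT}).
Hypotheses (nsNG : N <| G) (abN : abelian N).

Definition is_sec (s : gT -> gT) :=
  [/\ {in G &, {morph s : x y / x * y}}, {in N, forall n, s n = 1}
    & {in G, forall g, g * (s g)^-1 \in N}].

Lemma sNG : N \subset G. Proof. by case/andP: nsNG. Qed.

Lemma sec1 s : is_sec s -> s 1 = 1.
Proof. by case=> _ k _; rewrite k. Qed.

Lemma sec_in s g : is_sec s -> g \in G -> s g \in G.
Proof.
case=> _ _ c Gg; have := c g Gg => Nx.
have -> : s g = (g * (s g)^-1)^-1 * g by rewrite invMg invgK mulgKV.
by rewrite groupM // groupV (subsetP sNG).
Qed.

Lemma sec_kl s n g : is_sec s -> n \in N -> g \in G -> s (n * g) = s g.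
Proof.
move=> S Nn Gg; case: S => m k _.
have Gn : n \in G by apply: (subsetP sNG).
by rewrite (m n g Gn Gg) (k n Nn) mul1g.
Qed.

Lemma agree_fix (s t : gT -> gT) (a z : gT) :
  {in G &, {morph s : x y / x * y}} -> s 1 = 1 ->
  {in G &, {morph t : x y / x * y}} -> t 1 = 1 ->
  a \in G -> z \in G -> s a = t a -> s z = t z ->
  (G : {set gT}) = <<[set a; z]>> -> {in G, s =1 t}.
Proof.
move=> ms s1 mt t1 Ga Gz ea ez eG.
have gS : group_set [set g in G | s g == t g].
  apply/group_setP; split; first by rewrite inE group1 s1 t1 eqxx.
  move=> x y; rewrite !inE => /andP[Gx /eqP ex] /andP[Gy /eqP ey].
  by rewrite groupM // ms // mt // ex ey eqxx.
have : <<[set a; z]>> \subset Group gS.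
  rewrite gen_subG; apply/subsetP=> w; rewrite !inE => /orP[]/eqP->.
    by rewrite Ga ea eqxx.
  by rewrite Gz ez eqxx.
rewrite -eG => /subsetP sub g Gg.
by have := sub g Gg; rewrite inE => /andP[_ /eqP].
Qed.

Lemma sec_gen s u w : is_sec s -> u \in G -> w \in G -> s u = u -> s w = w ->
  (G : {set gT}) = <<[set u; w]>> -> N :=: 1.
Proof.
move=> S Gu Gw su sw eG.
have S' := S; case: S' => m k _.
have e := agree_fix m (sec1 S) (t := id) (fun x y _ _ => erefl) erefl Gu Gw su sw eG.
apply/trivgP/subsetP=> n Nn; rewrite inE.
have := e n (subsetP sNG n Nn); rewrite /= k // => <-; exact: eqxx.
Qed.

Lemma sec_comb s1 s2 s3 : is_sec s1 -> is_sec s2 -> is_sec s3 ->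
  is_sec (fun g => s1 g * (s2 g)^-1 * s3 g).
Proof.
move=> S1 S2 S3.
have key s s' g : is_sec s -> is_sec s' -> g \in G -> s g * (s' g)^-1 \in N.
  move=> Ss Ss' Gg; case: (Ss) => _ _ c; case: (Ss') => _ _ c'.
  have e : s g * (s' g)^-1 = (g * (s g)^-1)^-1 * (g * (s' g)^-1).
    by rewrite invMg invgK !mulgA mulgKV.
  by rewrite e groupM ?groupV ?c ?c'.
case: (S1) => m1 k1 c1; case: (S2) => m2 k2 c2; case: (S3) => m3 k3 c3.
split.
- move=> g h Gg Gh /=; rewrite m1 // m2 // m3 // invMg.
  set p := s1 h * (s2 h)^-1; set q := (s2 g)^-1 * s3 g.
  have Np : p \in N by apply: key.
  have Nq : q \in N.
    have e : q = (s3 g * (s2 g)^-1) ^ (s2 g) by rewrite /q conjgE !mulgA mulgKV.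
    rewrite e memJ_norm ?key //.
    by apply: (subsetP (normal_norm nsNG)); apply: sec_in.
  have cpq : p * q = q * p by apply: (centsP abN).
  transitivity (s1 g * (p * q) * s3 h); first by rewrite /p /q !mulgA.
  by rewrite cpq /p /q !mulgA.
- by move=> n Nn /=; rewrite k1 // k2 // k3 // invg1 !mulg1.
- move=> g Gg /=.
  have e : g * (s1 g * (s2 g)^-1 * s3 g)^-1 = (g * (s3 g)^-1) * (s2 g * (s1 g)^-1).
    by rewrite !invMg invgK !mulgA.
  by rewrite e groupM ?c3 ?key.
Qed.

End Sec.


Section Min.
Variables (gT : finGroupType) (G N : {group gT}).
Hypotheses (nsNG : N <| G) (abN : abelian N) (minN : minnormal N G).
Hypothesis ntN : N :!=: 1.

Let sNG : N \subset G := sNG nsNG.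
Let nNG : G \subset 'N(N) := normal_norm nsNG.

Lemma sub_ti (H : {group gT}) : H \subset G -> G \subset N * H ->
  (G : {set gT}) != H -> N :&: H = 1.
Proof.
move=> sHG sGNH neq.
have nIG : G \subset 'N(N :&: H).
  apply: subset_trans sGNH _; apply: mul_subG.
    by apply: cents_norm; apply: subset_trans abN (centS (subsetIl N H)).
  by apply: normsI; [apply: subset_trans sHG nNG | apply: normG].
case: (eqVneq (N :&: H)%G 1%G) => [/(congr1 val) //|nt].
have [_ mn] := mingroupP minN.
have eI : (N :&: H)%G :=: N.
  apply: mn; last by apply: subsetIl.
  by rewrite /= nIG andbT; apply/eqP => e; move/eqP: nt; apply; apply: val_inj.
have sNH : N \subset H by rewrite -eI subsetIr.
by move: neq; rewrite eqEsubset sHG andbT -(mulSGid sNH) sGNH.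
Qed.

Lemma remgr_sec (H : {group gT}) : H \subset G -> N :&: H = 1 ->
  G \subset N * H -> is_sec G N (remgr N H).
Proof.
move=> sHG ti sGNH.
have eG : N * H = G by apply/eqP; rewrite eqEsubset sGNH mul_subG.
have cp : H \in [complements to N in G] by apply/complP.
split.
- exact: remgrM.
- by move=> n Nn; apply: remgr1.
- move=> g Gg; rewrite -/(divgr N H g); apply: mem_divgr; rewrite eG //.
Qed.

Lemma gen2_sub u w : u \in G -> w \in G -> <<[set u; w]>> \subset G.
Proof.
by move=> Gu Gw; rewrite gen_subG; apply/subsetP=> x; rewrite !inE => /orP[]/eqP->.
Qed.

Lemma bad_sec u w : u \in G -> w \in G -> G \subset N * <<[set u; w]>> ->
  (G : {set gT}) != <<[set u; w]>> ->
  exists s, [/\ is_sec G N s, s u = u & s w = w].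
Proof.
move=> Gu Gw sG neq.
have sHG := gen2_sub Gu Gw.
have ti := sub_ti (H := <<[set u; w]>>%G) sHG sG neq.
exists (remgr N <<[set u; w]>>); split.
- exact: (remgr_sec (H := <<[set u; w]>>%G)).
- by rewrite remgr_id // mem_gen // set21.
- by rewrite remgr_id // mem_gen // set22.
Qed.

Lemma genmod_mul u w y : u \in G -> w \in G -> y \in N ->
  G \subset N * <<[set u; w]>> -> G \subset N * <<[set u; y * w]>>.
Proof.
move=> Gu Gw Ny sG.
have Gy : y \in G := subsetP sNG y Ny.
set K := <<[set u; y * w]>>.
have nNK : K \subset 'N(N) by apply: subset_trans (gen2_sub Gu _) nNG; rewrite groupM.
rewrite -(norm_joinEr nNK); apply: subset_trans sG _; apply: mul_subG.
  exact: joing_subl.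
have sKJ : K \subset N <*> K := joing_subr N K.
rewrite gen_subG.
apply/subsetP=> x; rewrite !inE => /orP[]/eqP->.
  by rewrite /= mem_gen // inE mem_gen ?set21 ?orbT.
rewrite -{1}(mulKg y w) /= groupM // ?groupV //.
  by rewrite mem_gen // inE Ny.
by rewrite mem_gen // inE mem_gen ?set22 ?orbT.
Qed.

Lemma liftA a b z : a \in G -> b \in G -> z \in G ->
  (G : {set gT}) = <<[set a; z]>> -> G \subset N * <<[set a; b]>> ->
  exists2 y, y \in N & (G : {set gT}) = <<[set a; y * b]>>.
Proof.
move=> Ga Gb Gz eG sG.
case: (pickP [pred y in N | (G : {set gT}) == <<[set a; y * b]>>]) =>
  [y /andP[Ny /eqP e]|hF]; first by exists y.
have Gy y : y \in N -> y * b \in G by move=> Ny; rewrite groupM // (subsetP sNG).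
have neq y : y \in N -> (G : {set gT}) != <<[set a; y * b]>>.
  by move=> Ny; move: (hF y); rewrite /= Ny /= => ->.
have sGy y : y \in N -> G \subset N * <<[set a; y * b]>>.
  by move=> Ny; apply: genmod_mul.
have ti y : y \in N -> N :&: <<[set a; y * b]>> = 1.
  move=> Ny; apply: (sub_ti (H := generated_group [set a; y * b])).
  - exact: gen2_sub (Gy y Ny).
  - exact: sGy.
  - exact: neq.
have secy : forall y, y \in N -> is_sec G N (remgr N <<[set a; y * b]>>).
  move=> y Ny; apply: (remgr_sec (H := generated_group [set a; y * b])); rewrite ?ti ?sGy //.
  exact: gen2_sub (Gy y Ny).
set h := fun y => divgr N <<[set a; y * b]>> z.
have hN y : y \in N -> h y \in N.
  by move=> Ny; apply: mem_divgr; apply: (subsetP (sGy y Ny)).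
have fixa y : y \in N -> remgr N <<[set a; y * b]>> a = a.
  by move=> Ny; apply: (@remgr_id _ N (generated_group [set a; y * b]) (ti y Ny)); rewrite mem_gen // set21.
have fixb y : y \in N -> remgr N <<[set a; y * b]>> b = y * b.
  move=> Ny; rewrite -[X in remgr _ _ X](mulKg y b).
  rewrite remgrMl ?groupV //; apply: (@remgr_id _ N (generated_group [set a; y * b]) (ti y Ny)); by rewrite mem_gen // set22.
have inj : {in N &, injective h}.
  move=> y1 y2 N1 N2; rewrite /h /divgr => /mulgI /invg_inj ez.
  have [m1 _ _] := secy y1 N1; have [m2 _ _] := secy y2 N2.
  have := agree_fix m1 (sec1 (secy y1 N1)) m2 (sec1 (secy y2 N2)) Ga Gz
     (etrans (fixa y1 N1) (esym (fixa y2 N2))) ez eG.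
  by move/(_ b Gb); rewrite fixb // fixb // => /mulIg.
have eim : h @: N = N.
  apply/eqP; rewrite eqEcard card_in_imset // leqnn andbT.
  by apply/subsetP=> x /imsetP[y Ny ->]; apply: hN.
have : (1 : gT) \in h @: N by rewrite eim group1.
case/imsetP=> y Ny; rewrite /h /divgr => e1.
have /eqP ez : z == remgr N <<[set a; y * b]>> z by rewrite eq_mulgV1 -e1.
have := sec_gen nsNG (secy y Ny) Ga Gz (fixa y Ny) (esym ez) eG.
by move/eqP; rewrite (negPf ntN).
Qed.

End Min.


Definition genrel (gT : finGroupType) (G : {group gT}) : rel gT :=
  fun u w => [&& u \in G, w \in G & (G : {set gT}) == <<[set u; w]>>].

Lemma gen2C (gT : finGroupType) (u w : gT) : <<[set u; w]>> = <<[set w; u]>>.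
Proof. by rewrite /= setUC. Qed.

Lemma gen_mulr (gT : finGroupType) (u w : gT) : <<[set u; w]>> = <<[set u; w * u^-1]>>.
Proof.
apply/eqP; rewrite eqEsubset !gen_subG; apply/andP; split; apply/subsetP=> x;
  rewrite !inE => /orP[]/eqP->.
- by apply: mem_gen; rewrite set21.
- rewrite -{1}(mulgKV u w) groupM //; first by apply: mem_gen; rewrite set22.
  by apply: mem_gen; rewrite set21.
- by apply: mem_gen; rewrite set21.
- rewrite groupM ?groupV //; by apply: mem_gen; rewrite ?set21 ?set22.
Qed.

Lemma genrel_sym (gT : finGroupType) (G : {group gT}) : symmetric (genrel G).
Proof. by move=> u w; rewrite /genrel gen2C andbCA. Qed.

Lemma conn_cn (gT : finGroupType) (G : {group gT}) u v w :
  u \in G -> v \in G -> w \in G ->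
  (G : {set gT}) = <<[set u; w]>> -> (G : {set gT}) = <<[set v; w]>> ->
  connect (genrel G) u v.
Proof.
move=> Gu Gv Gw e1 e2; apply: (@connect_trans _ _ w); apply: connect1.
  by rewrite /genrel Gu Gw e1 eqxx.
by rewrite /genrel Gv Gw -gen2C e2 eqxx.
Qed.

Section B.
Variables (gT : finGroupType) (G N : {group gT}).
Hypotheses (nsNG : N <| G) (abN : abelian N) (minN : minnormal N G).
Hypothesis ntN : N :!=: 1.

Let sNG : N \subset G := sNG nsNG.
Let nNG : G \subset 'N(N) := normal_norm nsNG.

Lemma genmod_mul2 u w x y : u \in G -> w \in G -> x \in N -> y \in N ->
  G \subset N * <<[set u; w]>> -> G \subset N * <<[set x * u; y * w]>>.
Proof.
move=> Gu Gw Nx Ny s.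
have s1 := genmod_mul nsNG Gu Gw Ny s.
have Gyw : y * w \in G by rewrite groupM // (subsetP sNG).
rewrite gen2C; apply: (genmod_mul nsNG Gyw Gu Nx); by rewrite gen2C.
Qed.

Variables c d : gT.
Hypotheses (Gc : c \in G) (Gd : d \in G) (gcd : G \subset N * <<[set c; d]>>).

Definition A x y := (G : {set gT}) != <<[set x * c; y * d]>>.

Lemma clos x1 y1 x2 y2 x3 y3 x y :
  x1 \in N -> y1 \in N -> x2 \in N -> y2 \in N -> x3 \in N -> y3 \in N ->
  x = x1 * x2^-1 * x3 -> y = y1 * y2^-1 * y3 ->
  A x1 y1 -> A x2 y2 -> A x3 y3 -> A x y.
Proof.
move=> Nx1 Ny1 Nx2 Ny2 Nx3 Ny3 -> -> A1 A2 A3.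
have GN z : z \in N -> z \in G by move=> Nz; apply: (subsetP sNG).
have Gxc z : z \in N -> z * c \in G by move=> Nz; rewrite groupM // GN.
have Gyd z : z \in N -> z * d \in G by move=> Nz; rewrite groupM // GN.
have [s1 [S1 f1 g1]] := bad_sec nsNG abN minN (Gxc _ Nx1) (Gyd _ Ny1) (genmod_mul2 Gc Gd Nx1 Ny1 gcd) A1.
have [s2 [S2 f2 g2]] := bad_sec nsNG abN minN (Gxc _ Nx2) (Gyd _ Ny2) (genmod_mul2 Gc Gd Nx2 Ny2 gcd) A2.
have [s3 [S3 f3 g3]] := bad_sec nsNG abN minN (Gxc _ Nx3) (Gyd _ Ny3) (genmod_mul2 Gc Gd Nx3 Ny3 gcd) A3.
have S := sec_comb nsNG abN S1 S2 S3.
have ev (s : gT -> gT) z e : is_sec G N s -> z \in N -> e \in G -> s (z * e) = s e.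
  by move=> h Nz Ge; apply: (sec_kl nsNG).

have Nx : x1 * x2^-1 * x3 \in N by rewrite !groupM ?groupV.
have Ny : y1 * y2^-1 * y3 \in N by rewrite !groupM ?groupV.
apply/negP => /eqP eG.
suff h : (N : {set gT}) = 1 by move: ntN; rewrite h eqxx.
apply: (sec_gen nsNG S (Gxc _ Nx) (Gyd _ Ny)) => //=.
- rewrite !(ev _ _ _ _ Nx Gc) //.
  rewrite -(ev _ _ _ S1 Nx1 Gc) -(ev _ _ _ S2 Nx2 Gc) -(ev _ _ _ S3 Nx3 Gc) f1 f2 f3.
  by rewrite !invMg !mulgA mulgK.
- rewrite !(ev _ _ _ _ Ny Gd) //.
  rewrite -(ev _ _ _ S1 Ny1 Gd) -(ev _ _ _ S2 Ny2 Gd) -(ev _ _ _ S3 Ny3 Gd) g1 g2 g3.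
  by rewrite !invMg !mulgA mulgK.
Qed.

End B.


Section SameB.
Variables (gT : finGroupType) (G N : {group gT}).
Hypotheses (nsNG : N <| G) (abN : abelian N) (minN : minnormal N G).
Hypothesis ntN : N :!=: 1.

Let sNG : N \subset G := sNG nsNG.
Let nNG : G \subset 'N(N) := normal_norm nsNG.

Lemma sameB c c' : c \in Vgen G -> c' \in Vgen G -> c' * c^-1 \in N ->
  connect (genrel G) c c'.
Proof.
move=> Vc Vc' Nx'.
move: Vc; rewrite inE => /andP[Gc /exists_inP[d Gd /eqP eGd0]].
move: Vc'; rewrite inE => /andP[Gc' /exists_inP[z' Gz' /eqP eGz'0]].
have eGd : (G : {set gT}) = <<[set c; d]>> := congr1 val eGd0.
have eGz' : (G : {set gT}) = <<[set c'; z']>> := congr1 val eGz'0.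
clear eGd0 eGz'0.
set x' := c' * c^-1 in Nx'.
have ec' : c' = x' * c by rewrite /x' mulgKV.
clearbody x'.
have GN z : z \in N -> z \in G by move=> Nz; apply: (subsetP sNG).
have gcd : G \subset N * <<[set c; d]>> by rewrite -eGd mulG_subr.
have gc'd : G \subset N * <<[set c'; d]>>.
  by have := genmod_mul2 nsNG Gc Gd Nx' (group1 N) gcd; rewrite mul1g -ec'.
have [y1 Ny1 eG1] := liftA nsNG abN minN ntN Gc' Gd Gz' eGz' gc'd.
case: (boolP (connect (genrel G) c c')) => // nc; exfalso.
pose A' := A G c d.
have cl := clos nsNG abN minN ntN Gc Gd gcd.
have kD v1 v2 : v1 \in N -> v2 \in N -> ~~ connect (genrel G) (v1 * c) (v2 * c) ->
    forall y, y \in N -> A' v1 y || A' v2 y.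
  move=> N1 N2 nc12 y Ny; rewrite /A' /A -negb_and; apply/negP => /andP[/eqP e1 /eqP e2].
  move/negP: nc12; apply; apply: (conn_cn (w := y * d)) => //; by rewrite !groupM // ?GN.
have kE v1 v2 : v1 \in N -> v2 \in N -> ~~ connect (genrel G) (v1 * c) (v2 * c) ->
    forall z, z \in N -> A' v1 (z * (d * v1^-1 * d^-1)) || A' v2 (z * (d * v2^-1 * d^-1)).
  move=> N1 N2 nc12 z Nz; rewrite /A' /A -negb_and; apply/negP => /andP[/eqP e1 /eqP e2].
  have conv v : <<[set v * c; (z * (d * v^-1 * d^-1)) * d]>> = <<[set v * c; z * (d * c)]>>.
    by rewrite [RHS]gen_mulr invMg !mulgA mulgK mulgKV.
  rewrite !conv in e1 e2.
  move/negP: nc12; apply; apply: (conn_cn (w := z * (d * c))) => //;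
    by rewrite !groupM // ?GN.
have nA11 : ~~ A' 1 1 by rewrite /A' /A !mul1g eGd eqxx.
have nAx : ~~ A' x' y1 by rewrite /A' /A -ec' eG1 eqxx.
have nc' : ~~ connect (genrel G) (1 * c) (x' * c) by rewrite mul1g -ec'.
have Ax'1 : A' x' 1.
  by have := kD 1 x' (group1 N) Nx' nc' 1 (group1 N); rewrite (negPf nA11).
have A1y1 : A' 1 y1.
  by have := kD 1 x' (group1 N) Nx' nc' y1 Ny1; rewrite (negPf nAx) orbF.
pose b := d * x' * d^-1.
have Nb : b \in N.
  have e : d * x' * d^-1 = x' ^ d^-1 by rewrite conjgE invgK !mulgA.
  rewrite /b e.
  by rewrite memJ_norm // (subsetP nNG) // groupV.
have eb : d * x'^-1 * d^-1 = b^-1 by rewrite /b !invMg invgK !mulgA.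
clearbody b.
have Axb : A' x' b^-1.
  have := kE 1 x' (group1 N) Nx' nc' 1 (group1 N).
  by rewrite invg1 mulg1 mulgV mul1g (negPf nA11) eb mul1g.
have Axyy : A' x' (y1 * y1).
  have := kD 1 x' (group1 N) Nx' nc' (y1 * y1) (groupM Ny1 Ny1).
  case/orP => // h; exfalso; move/negP: nA11; apply.
  apply: (cl 1 y1 1 (y1 * y1) 1 y1) => //; rewrite ?group1 ?groupM //.
    by rewrite invg1 !mulg1.
  by rewrite invMg !mulgA mulgV mul1g mulVg.
pose t := d^-1 * y1^-1 * d.
have Nt : t \in N.
  have e : d^-1 * y1^-1 * d = y1^-1 ^ d by rewrite conjgE !mulgA.
  rewrite /t e.
  by rewrite memJ_norm ?groupV // (subsetP nNG).
have et : d * t^-1 * d^-1 = y1 by rewrite /t !invMg !invgK !mulgA mulgV mul1g mulgK.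
clearbody t.
have Nxt : x' * t \in N by rewrite groupM.
have ext : d * (x' * t)^-1 * d^-1 = b^-1 * y1.
  have ctx : t^-1 * x'^-1 = x'^-1 * t^-1.
    by apply: (centsP abN); rewrite groupV.
  by rewrite invMg ctx -et -eb !mulgA mulgKV.
have h5 v : v \in N -> ~~ connect (genrel G) (1 * c) (v * c) ||
                       ~~ connect (genrel G) (v * c) (x' * c).
  move=> Nv; rewrite -negb_and; apply: contra nc => /andP[h1 h2].
  by rewrite -[c]mul1g ec'; apply: connect_trans h1 h2.
have DorE v : v \in N -> A' v 1 \/ A' v (y1 * b * (d * v^-1 * d^-1)).
  move=> Nv; case/orP: (h5 v Nv) => h.
    by left; have := kD 1 v (group1 N) Nv h 1 (group1 N); rewrite (negPf nA11).
  right; have := kE v x' Nv Nx' h (y1 * b) (groupM Ny1 Nb).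
  by rewrite eb mulgK (negPf nAx) orbF.
have F1 : A' t 1 \/ A' t (y1 * b * y1) by have := DorE t Nt; rewrite et.
have F2 : A' (x' * t) 1 \/ A' (x' * t) (y1 * y1).
  by case: (DorE _ Nxt) => h; [left | right] => //; move: h; rewrite ext !mulgA mulgK.
have NN := (group1 N, groupM, groupV).
move/negP: nAx; apply.
case: F1 => [D1|E1]; case: F2 => [D2|E2].
- apply: (cl (x' * t) 1 t 1 1 y1) => //; rewrite ?group1 ?groupM ?groupV //.
    by rewrite mulg1 mulgK.
  by rewrite invg1 !mul1g.
- have h : A' x' (y1 * y1 * y1).
    apply: (cl (x' * t) (y1 * y1) t 1 1 y1) => //; rewrite ?group1 ?groupM ?groupV //.
      by rewrite mulg1 mulgK.
    by rewrite invg1 mulg1.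
  apply: (cl x' (y1 * y1 * y1) x' (y1 * y1) x' 1) => //; rewrite ?group1 ?groupM ?groupV //.
    by rewrite mulgV mul1g.
  by rewrite mulg1 invMg !mulgA !mulgK.
- have h : A' x' (y1^-1 * b^-1).
    apply: (cl (x' * t) 1 t (y1 * b * y1) 1 y1) => //; rewrite ?group1 ?groupM ?groupV //.
      by rewrite mulg1 mulgK.
    by rewrite !invMg !mulgA mul1g mulgKV.
  have h2 : A' x' y1^-1.
    apply: (cl x' (y1^-1 * b^-1) x' b^-1 x' 1) => //; rewrite ?group1 ?groupM ?groupV //.
      by rewrite mulgV mul1g.
    by rewrite invgK mulg1 mulgKV.
  apply: (cl x' 1 x' y1^-1 x' 1) => //; rewrite ?group1 ?groupM ?groupV //.
    by rewrite mulgV mul1g.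
  by rewrite invgK mulg1 mul1g.
- have h : A' x' (y1 * b^-1).
    apply: (cl (x' * t) (y1 * y1) t (y1 * b * y1) 1 y1) => //; rewrite ?group1 ?groupM ?groupV //.
      by rewrite mulg1 mulgK.
    by rewrite !invMg !mulgA mulgKV mulgK.
  apply: (cl x' (y1 * b^-1) x' b^-1 x' 1) => //; rewrite ?group1 ?groupM ?groupV //.
    by rewrite mulgV mul1g.
  by rewrite invgK mulg1 mulgKV.
Qed.


End SameB.


Lemma quot2 (gT : finGroupType) (N : {group gT}) (u w : gT) :
  u \in 'N(N) -> w \in 'N(N) ->
  <<[set u; w]>> / N = <<[set coset N u; coset N w]>>.
Proof.
move=> Nu Nw; rewrite /quotient morphim_gen; last first.
  by apply/subsetP=> x /set2P[]->; [exact: Nu | exact: Nw].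
by rewrite morphimU !morphim_set1.
Qed.

Lemma VgenP (gT : finGroupType) (G : {group gT}) x :
  reflect (x \in G /\ exists2 z, z \in G & (G : {set gT}) = <<[set x; z]>>)
          (x \in Vgen G).
Proof.
rewrite inE; apply: (iffP andP) => [[Gx /exists_inP[z Gz /eqP e]]|[Gx [z Gz e]]].
  by split=> //; exists z => //; apply: (congr1 val e).
split=> //; apply/exists_inP; exists z => //; apply/eqP; apply: val_inj.
exact: e.
Qed.

Section Lift.
Variables (gT : finGroupType) (G N : {group gT}).
Hypotheses (nsNG : N <| G) (abN : abelian N) (minN : minnormal N G).
Hypothesis ntN : N :!=: 1.

Let sNG : N \subset G := sNG nsNG.
Let nNG : G \subset 'N(N) := normal_norm nsNG.

Lemma lift (p : seq (coset_of N)) a : a \in Vgen G ->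
  path (genrel (G / N)%G) (coset N a) p ->
  exists2 a', a' \in Vgen G & coset N a' = last (coset N a) p /\ connect (genrel G) a a'.
Proof.
elim: p a => [|B p IHp] a Va /=; first by move=> _; exists a => //; split.
case/andP=> e pth.
case/VgenP: Va => Ga [z Gz eGz].
case/and3P: e => _ QB /eqP eQ.
case/morphimP: QB => b Nb Gb eB.
have gab : G \subset N * <<[set a; b]>>.
  rewrite -quotientSK // quot2 ?(subsetP nNG) // -eB.
  by rewrite -eQ.
have [y Ny eG1] := liftA nsNG abN minN ntN Ga Gb Gz eGz gab.
have Gyb : y * b \in G by rewrite groupM // (subsetP sNG).
have Va1 : y * b \in Vgen G.
  by apply/VgenP; split=> //; exists a => //; rewrite gen2C.
have cB : coset N (y * b) = B by rewrite coset_kerl.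
rewrite -cB in pth.
have [a' Va' [ea' ca']] := IHp _ Va1 pth.
exists a' => //; split; first by rewrite ea' cB.
apply: connect_trans ca'; apply: connect1.
by rewrite /genrel Ga Gyb -eG1 eqxx.
Qed.

End Lift.

Lemma main_gen n : forall (gT : finGroupType) (G : {group gT}), #|G| <= n ->
  solvable G -> forall x y, x \in Vgen G -> y \in Vgen G -> connect (genrel G) x y.
Proof.
elim: n => [|n IH] gT G leG solG x y Vx Vy.
  by move: leG; rewrite leqNgt cardG_gt0.
have [G1|ntG] := eqVneq (G : {set gT}) 1.
  case/VgenP: Vx => Gx _; case/VgenP: Vy => Gy _.
  move: Gx Gy; rewrite G1 !inE => /eqP-> /eqP->; exact: connect0.
have [N minN sNG] := minnormal_exists ntG (normG G).
have [nNG ntN abelN] := minnormal_solvable minN sNG solG.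
have abN : abelian N by case/is_abelemP: abelN => p _ /abelem_abelian.
have nsNG : N <| G by rewrite /normal sNG nNG.
have ltQ : #|G / N| <= n.
  by rewrite -ltnS; apply: leq_trans leG; apply: ltn_quotient.
have solQ : solvable (G / N) by apply: quotient_sol.
have VQ u : u \in Vgen G -> coset N u \in Vgen (G / N)%G.
  case/VgenP=> Gu [z Gz e]; apply/VgenP; split; first exact: mem_quotient.
  exists (coset N z); first exact: mem_quotient.
  by rewrite /= e quot2 ?(subsetP nNG).
have := IH _ (G / N)%G ltQ solQ _ _ (VQ x Vx) (VQ y Vy).
case/connectP=> p pth ely.
have [a' Va' [ea' ca']] := lift nsNG abN minN ntN Vx pth.
apply: connect_trans ca' _.
apply: (sameB nsNG abN minN ntN Va' Vy).
case/VgenP: Va' => Ga' _; case/VgenP: Vy => Gy _.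
rewrite -mem_rcoset; apply/rcoset_kercosetP; rewrite ?(subsetP nNG) //.
by rewrite ea' ely.
Qed.


Theorem lemma6p1 (gT : finGroupType) (F : group_class gT) (G : {group gT})
  (hsol : solvable G) (h2 : two_generated G) (hGF : ~~ F (G : {set gT}))
  (x y : gT) (hx : x \in Vgen G) (hy : y \in Vgen G) :
  [/\ x \in GammaF_vert F G, y \in GammaF_vert F G
    & connect (GammaF_adj F G) x y].
Proof.
have vert u : u \in Vgen G -> u \in GammaF_vert F G.
  case/VgenP=> Gu [z Gz e]; rewrite inE Gu /=; apply/exists_inP; exists z => //.
  by rewrite -e.
split; [exact: vert | exact: vert |].
apply: (connect_sub (e := genrel G)); last exact: (main_gen (leqnn _) hsol hx hy).
move=> u w /and3P[Gu Gw /eqP e]; apply: connect1.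
by rewrite /GammaF_adj Gu Gw -e hGF.
Qed.
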